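(* Let $p\ge 2$ and $\varphi\in\mathbb{C}^{p-1}\setminus\Omega_1$. Then $\dim H^1(F_\varphi,F_\varphi)=p-1$.
   Context: Let $p\ge 2$ and $\varphi=(\varphi_1,\dots,\varphi_{p-1})\in\mathbb{C}^{p-1}$. $F_\varphi$ denotes the $2p$-dimensional complex Lie algebra with basis $X_1,\dots,X_{2p}$ whose nonzero brackets (up to antisymmetry) are $[X_1,X_2]=X_1$, $[X_2,X_{2k+1}]=\varphi_kX_{2k+1}$, $[X_2,X_{2k+2}]=-(1+\varphi_k)X_{2k+2}$, $[X_{2k+1},X_{2k+2}]=X_1$ for $1\le k\le p-1$. $\Omega_1\subset\mathbb{C}^{p-1}$ is the union of the hyperplanes $\{1+\varphi_i+\varphi_j=0\}$, $\{2+\varphi_i+\varphi_j=0\}$ ($1\le i,j\le p-1$), $\{\varphi_i-\varphi_j=0\}$ ($1\le i\ne j\le p-1$), $\{\varphi_i=0\}$, $\{\varphi_i+1=0\}$, $\{2\varphi_i+1=0\}$ ($1\le i\le p-1$). $H^1(\mathfrak g,\mathfrak g)$ is the first Chevalley–Eilenberg cohomology with adjoint coefficients (derivations modulo inner derivations). *)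

(* Defs.v *)
(* Complex numbers: R[i] (mathcomp-real-closed `complex`)
   for an arbitrary R : realType, i.e. the field C. *)
From HB Require Import structures.
From mathcomp Require Import all_boot all_order all_algebra complex.
From mathcomp Require Import reals.
Set Implicit Arguments. Unset Strict Implicit. Unset Printing Implicit Defensive.
Import Order.TTheory GRing.Theory Num.Theory.
Local Open Scope ring_scope.

Section LieCohomology.
Variables (K : fieldType) (n : nat).

(* A finite-dimensional Lie algebra K^n given by structure constants:
   c i j = [e_i, e_j]  (vectors are row vectors). *)
Definition basis_vec (i : 'I_n) : 'rV[K]_n := delta_mx 0 i.

Definition lie_br (c : 'I_n -> 'I_n -> 'rV[K]_n) (u v : 'rV[K]_n) : 'rV[K]_n :=
  \sum_(i < n) \sum_(j < n) (u 0 i * v 0 j) *: c i j.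

(* Linear endomorphisms are n x n matrices acting on the right: x |-> x *m D.
   Defect of D being a derivation, tested on pairs of basis vectors. *)
Definition der_defect (c : 'I_n -> 'I_n -> 'rV[K]_n) (D : 'M[K]_n)
  : {ffun 'I_n * 'I_n -> 'rV[K]_n} :=
  [ffun ij : 'I_n * 'I_n =>
     lie_br c (basis_vec ij.1) (basis_vec ij.2) *m D
     - lie_br c (basis_vec ij.1 *m D) (basis_vec ij.2)
     - lie_br c (basis_vec ij.1) (basis_vec ij.2 *m D)].

Definition Der (c : 'I_n -> 'I_n -> 'rV[K]_n) : {vspace 'M[K]_n} :=
  lker (linfun (der_defect c)).

Definition ad (c : 'I_n -> 'I_n -> 'rV[K]_n) (x : 'rV[K]_n) : 'M[K]_n :=
  \matrix_(j < n) lie_br c x (basis_vec j).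

Definition Inn (c : 'I_n -> 'I_n -> 'rV[K]_n) : {vspace 'M[K]_n} :=
  <<[seq ad c (basis_vec i) | i <- enum 'I_n]>>%VS.

(* dim H^1(g, g) = dim Der(g) / (Der(g) ∩ ad(g))   ( = Der/Inn ). *)
Definition H1_dim (c : 'I_n -> 'I_n -> 'rV[K]_n) : nat :=
  (\dim (Der c) - \dim (Der c :&: Inn c))%N.

End LieCohomology.

Section Fphi.
Variables (K : fieldType) (p : nat) (phi : nat -> K).
(* phi k = varphi_k for 1 <= k <= p-1 (other values irrelevant).
   0-based basis indices: X_m is index m-1; so X_1 ~ 0, X_2 ~ 1,
   X_{2k+1} ~ 2k, X_{2k+2} ~ 2k+1. *)

Definition ev (m : nat) : 'rV[K]_(2 * p) := \row_(l < 2 * p) (if val l == m then 1 else 0).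

(* bracket [X_{i+1}, X_{j+1}] for an ordered pair with i < j *)
Definition Fbr_up (i j : nat) : 'rV[K]_(2 * p) :=
  if (i == 0%N) && (j == 1%N) then ev 0
  else if (i == 1%N) && (2 <= j)%N then
    (if ~~ odd j then phi j./2 *: ev j else - (1 + phi j./2) *: ev j)
  else if (2 <= i)%N && ~~ odd i && (j == i.+1) then ev 0
  else 0.

Definition Fc (i j : 'I_(2 * p)) : 'rV[K]_(2 * p) :=
  if (val i < val j)%N then Fbr_up i j
  else if (val j < val i)%N then - Fbr_up j i
  else 0.

End Fphi.

Definition in_Omega1 (K : fieldType) (p : nat) (phi : nat -> K) : Prop :=
  (exists i j : nat, [/\ (1 <= i <= p.-1)%N, (1 <= j <= p.-1)%N &
      [\/ 1 + phi i + phi j = 0, 2 + phi i + phi j = 0 |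
          (i != j) /\ phi i - phi j = 0]])
  \/ (exists i : nat, (1 <= i <= p.-1)%N /\
      [\/ phi i = 0, phi i + 1 = 0 | 2 * phi i + 1 = 0]).

Arguments Fc {K} p phi i j.
Arguments in_Omega1 {K} p phi.
Arguments H1_dim {K n} c.

(* Main.v *)
Require Import Defs.
From HB Require Import structures.
From mathcomp Require Import all_boot all_order all_algebra complex.
From mathcomp Require Import reals.
From mathcomp Require Import zify ring.
Set Implicit Arguments. Unset Strict Implicit. Unset Printing Implicit Defensive.
Import Order.TTheory GRing.Theory.
Local Open Scope ring_scope.

Section Gen.
Variables (K : fieldType) (n : nat) (c : 'I_n -> 'I_n -> 'rV[K]_n).

Lemma lie_brDl a u u' v : lie_br c (a *: u + u') v = a *: lie_br c u v + lie_br c u' v.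
Proof.
rewrite /lie_br scaler_sumr -big_split; apply eq_bigr => i _.
rewrite scaler_sumr -big_split; apply eq_bigr => j _ /=.
by rewrite !mxE scalerA -scalerDl mulrDl mulrA.
Qed.

Lemma lie_brDr a u v v' : lie_br c u (a *: v + v') = a *: lie_br c u v + lie_br c u v'.
Proof.
rewrite /lie_br scaler_sumr -big_split; apply eq_bigr => i _.
rewrite scaler_sumr -big_split; apply eq_bigr => j _ /=.
by rewrite !mxE scalerA -scalerDl mulrDr mulrCA.
Qed.

Lemma shuf (V : zmodType) (x y z u v w : V) : x + y - z - u - v - w = x - z - v + y - u - w.
Proof. by rewrite (addrAC (x - z)) (addrAC x) (addrAC (x - z + y) (- u)). Qed.

Lemma dd_lin : GRing.linear_for *:%R (der_defect c).
Proof.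
move=> a D D'; apply/ffunP => ij; rewrite !ffunE.
rewrite mulmxDr -scalemxAr !mulmxDr -!scalemxAr lie_brDl lie_brDr.
rewrite [in RHS]scalerBr [in RHS]scalerBr.
set A := lie_br c _ _ *m D; set B := lie_br c _ _ *m D'.
set C1 := lie_br c (_ *m D) _; set C2 := lie_br c (_ *m D') _.
set E1 := lie_br c _ (_ *m D); set E2 := lie_br c _ (_ *m D').
rewrite !opprD !addrA; exact: shuf.
Qed.

Definition ddL : {linear 'M[K]_n -> {ffun 'I_n * 'I_n -> 'rV[K]_n}} :=
  HB.pack (der_defect c) (GRing.isLinear.Build K _ _ _ (der_defect c) dd_lin).

Lemma memDer D : (D \in Der c) = (der_defect c D == 0).
Proof. by rewrite /Der memv_ker (lfunE ddL). Qed.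


Lemma basis_vecE (i j : 'I_n) : basis_vec K i 0 j = (i == j)%:R.
Proof. by rewrite /basis_vec mxE eqxx /= eq_sym. Qed.

Lemma lie_br0l v : lie_br c 0 v = 0.
Proof. by rewrite /lie_br big1 // => i _; rewrite big1 // => j _; rewrite mxE mul0r scale0r. Qed.

Lemma lie_brZl a u v : lie_br c (a *: u) v = a *: lie_br c u v.
Proof. by rewrite -[a *: u]addr0 lie_brDl lie_br0l addr0. Qed.

Lemma lie_br0r u : lie_br c u 0 = 0.
Proof. by rewrite /lie_br big1 // => i _; rewrite big1 // => j _; rewrite mxE mulr0 scale0r. Qed.

Lemma lie_brZr a u v : lie_br c u (a *: v) = a *: lie_br c u v.
Proof. by rewrite -[a *: v]addr0 lie_brDr lie_br0r addr0. Qed.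

Lemma br_e1 (a : 'I_n) v : lie_br c (basis_vec K a) v = \sum_j v 0 j *: c a j.
Proof.
rewrite /lie_br (bigD1 a) //= [X in _ + X]big1 ?addr0 => [|i ne].
  by apply: eq_bigr => j _; rewrite basis_vecE eqxx mul1r.
by rewrite big1 // => j _; rewrite basis_vecE eq_sym (negbTE ne) mul0r scale0r.
Qed.

Lemma br_e2 u (b : 'I_n) : lie_br c u (basis_vec K b) = \sum_i u 0 i *: c i b.
Proof.
rewrite /lie_br; apply: eq_bigr => i _.
rewrite (bigD1 b) //= [X in _ + X]big1 ?addr0 => [|j ne].
  by rewrite basis_vecE eqxx mulr1.
by rewrite basis_vecE eq_sym (negbTE ne) mulr0 scale0r.
Qed.

Lemma br_ee (a b : 'I_n) : lie_br c (basis_vec K a) (basis_vec K b) = c a b.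
Proof.
rewrite br_e1 (bigD1 b) //= [X in _ + X]big1 ?addr0 => [|j ne].
  by rewrite basis_vecE eqxx scale1r.
by rewrite basis_vecE eq_sym (negbTE ne) scale0r.
Qed.

Lemma derP D : D \in Der c -> forall i j,
  c i j *m D = lie_br c (row i D) (basis_vec K j) + lie_br c (basis_vec K i) (row j D).
Proof.
rewrite memDer => /eqP /ffunP H i j; move: (H (i, j)); rewrite !ffunE /= br_ee -!rowE.
by move/eqP; rewrite subr_eq0 subr_eq => /eqP ->; rewrite addrC.
Qed.

Lemma diag_Der (d : 'I_n -> K) :
  (forall i j m, c i j 0 m * d m = (d i + d j) * c i j 0 m) ->
  \matrix_(a, m) ((a == m)%:R * d a) \in Der c.
Proof.
move=> Hd; rewrite memDer; apply/eqP/ffunP => -[i j]; rewrite !ffunE /= br_ee.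
have rw (t : 'I_n) : basis_vec K t *m \matrix_(a, m) ((a == m)%:R * d a) = d t *: basis_vec K t.
  apply/rowP => m; rewrite !mxE (bigD1 t) //= [X in _ + X]big1 ?addr0 => [|s ne].
    by rewrite basis_vecE !mxE eqxx mul1r mulrC eq_sym.
  by rewrite /basis_vec !mxE /= (negbTE ne) mul0r.
rewrite !rw lie_brZl lie_brZr !br_ee; apply/rowP => m.
have e : (c i j *m \matrix_(a, m) ((a == m)%:R * d a)) 0 m = c i j 0 m * d m.
  rewrite mxE (bigD1 m) //= [X in _ + X]big1 ?addr0 => [|s ne]; last by rewrite mxE (negbTE ne) mul0r mulr0.
  by rewrite mxE eqxx mul1r.
move: e; rewrite !mxE => ->; rewrite Hd mulrDl; ring.
Qed.
End Gen.

Section F.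
Variables (K : fieldType) (p : nat) (phi : nat -> K).
Local Notation N := (2 * p)%N.
Local Notation c := (Fc p phi).

Definition lam (t : nat) : K :=
  match t with 0 => -1 | 1 => 0 | _ => if odd t then -(1 + phi t./2) else phi t./2 end.
Definition partner (t : nat) : nat := if odd t then t.-1 else t.+1.
Definition sgn (t : nat) : K := if odd t then -1 else 1.

Lemma Fc1 (o1 j : 'I_N) : nat_of_ord o1 = 1%N -> c o1 j = lam j *: ev K p j.
Proof.
case: o1 => o ho /= h1; subst o; rewrite /Fc /Fbr_up /=.
case: j => [[|[|j]] hj] /=.
- by rewrite scaleN1r.
- by rewrite scale0r.
- by case: (odd j).
Qed.

Lemma Fc_1 (o1 i : 'I_N) : nat_of_ord o1 = 1%N -> c i o1 = - lam i *: ev K p i.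
Proof.
case: o1 => o ho /= h1; subst o; rewrite /Fc /Fbr_up /=.
case: i => [[|[|i]] hi] /=.
- by rewrite opprK scale1r.
- by rewrite oppr0 scale0r.
- by case: (odd i); rewrite /= ?scaleNr ?opprK.
Qed.

Lemma Fc_gen (i j : 'I_N) : nat_of_ord i != 1%N -> nat_of_ord j != 1%N ->
  c i j = if (2 <= i)%N && (nat_of_ord j == partner i) then sgn i *: ev K p 0 else 0.
Proof.
rewrite /Fc /Fbr_up /partner /sgn.
case: i => [[|[|i]] hi] //=; case: j => [[|[|j]] hj] //= _ _.
- by case: (odd i); rewrite oppr0.
rewrite !negbK; case oi: (odd i) => /=; repeat case: ifP => ?; try (exfalso; lia); rewrite ?scale1r ?scaleN1r ?oppr0 //.
Qed.


Lemma ifR (b : bool) : (if b then 1 else 0 : K) = b%:R.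
Proof. by case: b. Qed.

Lemma evE t (m : 'I_N) : ev K p t 0 m = (nat_of_ord m == t)%:R.
Proof. by rewrite mxE; case: eqP. Qed.

Lemma ev_ord (t : 'I_N) : ev K p t = basis_vec K t.
Proof. by apply/rowP => m; rewrite evE basis_vecE eq_sym. Qed.

Lemma Fc_anti i j : c j i = - c i j.
Proof.
by rewrite /Fc; case: ltngtP => h; rewrite ?opprK ?oppr0.
Qed.

Lemma sum_col1 (o1 : 'I_N) (f : 'I_N -> K) m : nat_of_ord o1 = 1%N ->
  (\sum_i f i *: c i o1) 0 m = - (f m * lam m).
Proof.
move=> h1; rewrite summxE (bigD1 m) //= [X in _ + X]big1 ?addr0 => [|i ne].
  by rewrite Fc_1 // !mxE eqxx mulr1 mulrN.
rewrite Fc_1 // !mxE; case: eqP => [e|]; last by rewrite !mulr0.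
by exfalso; move: ne => /eqP; apply; apply: ord_inj.
Qed.

Lemma sum_col0 (o0 o1 : 'I_N) (f : 'I_N -> K) m : nat_of_ord o0 = 0%N -> nat_of_ord o1 = 1%N ->
  (\sum_i f i *: c i o0) 0 m = - (f o1 * (nat_of_ord m == 0%N)%:R).
Proof.
move=> h0 h1; rewrite summxE (bigD1 o1) //= [X in _ + X]big1 ?addr0 => [|i ne].
  by rewrite Fc1 // !mxE h0 /= mulN1r mulrN; case: (_ == _).
have ne1 : nat_of_ord i != 1%N by apply: contra ne => /eqP e; apply/eqP/ord_inj; rewrite e h1.
rewrite Fc_gen //; last by rewrite h0.
rewrite /partner; case: ifP => h; last by rewrite scaler0 mxE.
exfalso; move: h; case: (odd i); lia.
Qed.

Lemma sum_col (o1 a b : 'I_N) (f : 'I_N -> K) m : nat_of_ord o1 = 1%N -> (2 <= a)%N ->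
  nat_of_ord b = partner a ->
  (\sum_i f i *: c i a) 0 m = f o1 * lam a * (nat_of_ord m == nat_of_ord a)%:R + f b * sgn b * (nat_of_ord m == 0%N)%:R.
Proof.
move=> h1 ha hb.
have nb1 : b != o1.
  apply/negP => /eqP e; move: hb; rewrite e h1 /partner; case oa: (odd a) => /=; lia.
have na1 : nat_of_ord a != 1%N by lia.
rewrite summxE (bigD1 o1) //= (bigD1 b) //= big1 ?addr0 => [|i /andP[ne1 neb]].
- rewrite Fc1 // Fc_gen ?hb; first last.
  + by [].
  + by move: hb; rewrite /partner; case oa: (odd a) => /=; lia.
  have -> : (1 < partner a)%N && (nat_of_ord a == partner (partner a)).
    by rewrite /partner; case oa: (odd a) => /=; [rewrite ifF|rewrite ifT]; lia.
  by rewrite !mxE !mulrA !ifR.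
- have ni1 : nat_of_ord i != 1%N by apply: contra ne1 => /eqP e; apply/eqP/ord_inj; rewrite e h1.
  rewrite Fc_gen //; case: ifP => h; last by rewrite scaler0 mxE.
  exfalso; move: neb => /eqP; apply; apply: ord_inj; rewrite hb.
  move: h ha; rewrite /partner; case oa: (odd a); case oi: (odd i) => /=; lia.
Qed.

Lemma sum_row1 (o1 : 'I_N) (g : 'I_N -> K) m : nat_of_ord o1 = 1%N ->
  (\sum_j g j *: c o1 j) 0 m = g m * lam m.
Proof.
move=> h1; rewrite summxE (bigD1 m) //= [X in _ + X]big1 ?addr0 => [|i ne].
  by rewrite Fc1 // !mxE eqxx mulr1.
rewrite Fc1 // !mxE; case: eqP => [e|]; last by rewrite !mulr0.
by exfalso; move: ne => /eqP; apply; apply: ord_inj.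
Qed.

Lemma lamE t : (2 <= t)%N -> lam t = if odd t then -(1 + phi t./2) else phi t./2.
Proof. by case: t => [|[|t]]. Qed.

Lemma partner_ge2 t : (2 <= t)%N -> (2 <= partner t)%N.
Proof. by rewrite /partner; case ot: (odd t) => /=; lia. Qed.

Lemma partner_half t : (partner t)./2 = t./2.
Proof. by rewrite /partner; case ot: (odd t) => /=; lia. Qed.

Lemma partner_odd t : odd (partner t) = ~~ odd t.
Proof. by rewrite /partner; case ot: (odd t) => /=; lia. Qed.

Lemma partner_invol t : partner (partner t) = t.
Proof. by rewrite /partner; case ot: (odd t) => /=; [rewrite ifF|rewrite ifT]; lia. Qed.

Lemma lam_partner t : (2 <= t)%N -> lam t + lam (partner t) = -1.
Proof.
move=> ht; rewrite !lamE ?partner_ge2 // partner_half partner_odd.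
by case: (odd t) => /=; ring.
Qed.

End F.

Section Main.
Variables (K : fieldType) (p : nat) (phi : nat -> K).
Hypothesis hp : (2 <= p)%N.
Hypothesis H0 : forall k, (1 <= k <= p.-1)%N -> phi k != 0.
Hypothesis H1 : forall k, (1 <= k <= p.-1)%N -> 1 + phi k != 0.
Hypothesis Hd : forall k l, (1 <= k <= p.-1)%N -> (1 <= l <= p.-1)%N -> k != l -> phi k != phi l.
Hypothesis Hs : forall k l, (1 <= k <= p.-1)%N -> (1 <= l <= p.-1)%N -> 1 + phi k + phi l != 0.
Local Notation N := (2 * p)%N.
Local Notation c := (Fc p phi).
Local Notation lam := (lam phi).

Lemma zero_of (x L R k : K) : L = R -> x = k * (L - R) -> x = 0.
Proof. by move=> -> ->; rewrite subrr mulr0. Qed.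

Lemma eq_of (x y L R k : K) : L = R -> x - y = k * (L - R) -> x = y.
Proof. by move=> -> e; apply/eqP; rewrite -subr_eq0 e subrr mulr0. Qed.

Lemma lam_inj a m : (a < N)%N -> (m < N)%N -> lam a = lam m -> a = m.
Proof.
move=> ha hm E.
have rg t : (2 <= t)%N -> (t < N)%N -> (1 <= t./2 <= p.-1)%N by lia.
case: (leqP 2 a) => a2; case: (leqP 2 m) => m2.
- move: E; rewrite !lamE //.
  have [ra rm] := (rg a a2 ha, rg m m2 hm).
  case oa: (odd a); case om: (odd m) => E.
  + case: (eqVneq a./2 m./2) => h; first lia.
    by case/negP: (Hd ra rm h); apply/eqP; apply: (eq_of (k := -1) E); ring.
  + by case/negP: (Hs ra rm); apply/eqP; apply: (zero_of (k := -1) E); ring.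
  + by case/negP: (Hs ra rm); apply/eqP; apply: (zero_of (k := 1) E); ring.
  + case: (eqVneq a./2 m./2) => h; first lia.
    by case/negP: (Hd ra rm h); apply/eqP; apply: (eq_of (k := 1) E); ring.
- move: E; rewrite lamE //; have ra := rg a a2 ha.
  case: m m2 {hm} => [|[|]] // _; case oa: (odd a) => /= E.
  + by case/negP: (H0 ra); apply/eqP; apply: (zero_of (k := -1) E); ring.
  + by case/negP: (H1 ra); apply/eqP; apply: (zero_of (k := 1) E); ring.
  + by case/negP: (H1 ra); apply/eqP; apply: (zero_of (k := -1) E); ring.
  + by case/negP: (H0 ra); apply/eqP; apply: (zero_of (k := 1) E); ring.
- move: E; rewrite (lamE _ m2); have rm := rg m m2 hm.
  case: a a2 {ha} => [|[|]] // _; case om: (odd m) => /= E.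
  + by case/negP: (H0 rm); apply/eqP; apply: (zero_of (k := 1) E); ring.
  + by case/negP: (H1 rm); apply/eqP; apply: (zero_of (k := -1) E); ring.
  + by case/negP: (H1 rm); apply/eqP; apply: (zero_of (k := 1) E); ring.
  + by case/negP: (H0 rm); apply/eqP; apply: (zero_of (k := -1) E); ring.
- case: a a2 {ha} E => [|[|]] // _; case: m m2 {hm} => [|[|]] //= _ E.
  + by move: (oner_neq0 K); rewrite -oppr_eq0 E eqxx.
  + by move: (oner_neq0 K); rewrite -oppr_eq0 -E eqxx.
Qed.

Lemma lt0N : (0 < N)%N. Proof. lia. Qed.
Lemma lt1N : (1 < N)%N. Proof. lia. Qed.
Definition o0 : 'I_N := Ordinal lt0N.
Definition o1 : 'I_N := Ordinal lt1N.
Lemma o0E : nat_of_ord o0 = 0%N. Proof. by []. Qed.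
Lemma o1E : nat_of_ord o1 = 1%N. Proof. by []. Qed.

Definition pord (v : 'I_N) : 'I_N := insubd o0 (partner v).
Lemma pordE (v : 'I_N) : (2 <= v)%N -> nat_of_ord (pord v) = partner v.
Proof.
move=> h; rewrite /pord val_insubd ifT //.
by move: (ltn_ord v); rewrite /partner; case ov: (odd v) => /=; lia.
Qed.

Lemma lam_ne (a m : 'I_N) : a != m -> lam a != lam m.
Proof. by move=> ne; apply/eqP => /lam_inj e; move/eqP: ne; apply; apply: ord_inj; apply: e. Qed.

Lemma lam_nz (a : 'I_N) : nat_of_ord a != 1%N -> lam a != 0.
Proof.
move=> h; have : a != o1 by apply: contra h => /eqP ->.
by move/lam_ne; rewrite o1E.
Qed.

Section Der.
Variable D : 'M[K]_N.
Hypothesis hD : D \in Der c.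

Lemma E1 (v m : 'I_N) : lam v * D v m = (\sum_i D o1 i *: c i v) 0 m + D v m * lam m.
Proof.
have := derP hD o1 v; move/(congr1 (fun x : 'rV_N => x 0 m)).
rewrite (Fc1 _ _ o1E) -scalemxAl ev_ord -rowE br_e2 br_e1 !mxE => ->.
rewrite -(sum_row1 _ _ _ o1E); congr (_ + _).
- by rewrite !summxE; apply: eq_bigr => i _; rewrite !mxE.
- by rewrite !summxE; apply: eq_bigr => i _; rewrite !mxE.
Qed.

Lemma F1 : D o1 o1 = 0.
Proof.
have := E1 o0 o0; rewrite (sum_col0 _ _ _ o0E o1E) o0E /= mulr1 => e.
by apply: (zero_of (k := 1) e); ring.
Qed.

Lemma F2 m : m != o0 -> D o0 m = 0.
Proof.
move=> ne; have := E1 o0 m; rewrite (sum_col0 _ _ _ o0E o1E) F1 mul0r oppr0 add0r.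
move/eqP; rewrite mulrC -subr_eq0 -mulrBr mulf_eq0 subr_eq0 => /orP[/eqP //|].
by rewrite eq_sym (negbTE (lam_ne ne)).
Qed.

Lemma F3 (v m : 'I_N) : (2 <= v)%N -> m != o0 -> m != v -> D v m = 0.
Proof.
move=> v2 m0 mv; have := E1 v m; rewrite (sum_col _ _ _ o1E v2 (pordE v2)) F1 !mul0r add0r.
have -> : (nat_of_ord m == 0%N) = false by apply/negbTE; apply: contra m0 => /eqP e; apply/eqP/ord_inj.
rewrite mulr0 add0r; move/eqP; rewrite mulrC -subr_eq0 -mulrBr mulf_eq0 subr_eq0 => /orP[/eqP //|].
by rewrite eq_sym (negbTE (lam_ne mv)).
Qed.

Lemma F4 (v : 'I_N) : (2 <= v)%N -> (lam v - lam o0) * D v o0 = D o1 (pord v) * sgn K (pord v).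
Proof.
move=> v2; have := E1 v o0; rewrite (sum_col _ _ _ o1E v2 (pordE v2)) F1 !mul0r add0r o0E eqxx mulr1 => e.
by rewrite mulrBl e; ring.
Qed.


Lemma F5 (a : 'I_N) : (2 <= a)%N -> ~~ odd a -> D o0 o0 = D a a + D (pord a) (pord a).
Proof.
move=> a2 ea; set b := pord a.
have hb : nat_of_ord b = partner a by rewrite pordE.
have b2 : (2 <= b)%N by rewrite hb partner_ge2.
have hab : nat_of_ord a = partner b by rewrite hb partner_invol.
have := derP hD a b; move/(congr1 (fun x : 'rV_N => x 0 o0)).
rewrite Fc_gen; first last.
- lia.
- lia.
rewrite a2 hb eqxx /sgn (negbTE ea) scale1r -[0%N]/(nat_of_ord o0) ev_ord -rowE mxE br_e2 br_e1.
have -> : \sum_j row b D 0 j *: c a j = - \sum_j row b D 0 j *: c j a.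
  by rewrite -sumrN; apply: eq_bigr => j _; rewrite (@Fc_anti _ _ _ j a) scalerN.
rewrite !mxE (sum_col _ _ _ o1E b2 hab) (sum_col _ _ _ o1E a2 hb) !mxE => ->.
have e0 := o0E.
have -> : (nat_of_ord o0 == nat_of_ord b)%N = false by lia.
have -> : (nat_of_ord o0 == nat_of_ord a)%N = false by lia.
have -> : (nat_of_ord o0 == 0)%N = true by lia.
have ob : odd b by rewrite hb partner_odd.
by rewrite /sgn ob (negbTE ea) !mulr0 !add0r !mulr1 mulrN1 opprK.
Qed.

End Der.

Definition dkn (k t : nat) : K := (t == (2 * k)%N)%:R - (t == (2 * k).+1)%:R.
Definition Ek (k : nat) : 'M[K]_N := \matrix_(a, m) ((a == m)%:R * dkn k a).

Lemma dkn_partner k t : (2 <= t)%N -> dkn k t + dkn k (partner t) = 0.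
Proof.
move=> t2; rewrite /dkn /partner; case ot: (odd t) => /=;
case: (t =P 2 * k) => e1; case: (t =P (2 * k).+1) => e2;
case: (_ =P 2 * k) => e3; case: (_ =P (2 * k).+1) => e4; try lia; rewrite /=; ring.
Qed.

Lemma dkn_small k t : (1 <= k)%N -> (t < 2)%N -> dkn k t = 0.
Proof. by move=> k1 t2; rewrite /dkn; case: (t =P 2 * k) => e1; case: (t =P (2 * k).+1) => e2; try lia; rewrite subrr. Qed.

Lemma Ek_Der k : (1 <= k)%N -> Ek k \in Der c.
Proof.
move=> k1; apply: diag_Der => i j m.
have d1 : dkn k (nat_of_ord o1) = 0 by rewrite dkn_small.
have d0 : dkn k (nat_of_ord o0) = 0 by rewrite dkn_small.
case: (eqVneq i o1) => [->|ni].
  rewrite (Fc1 _ _ o1E) !mxE; case: ifP => [/eqP e|_]; last by rewrite !(mulr0, mul0r).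
  by rewrite (ord_inj e) d1 add0r mulrC.
case: (eqVneq j o1) => [->|nj].
  rewrite (Fc_1 _ _ o1E) !mxE; case: ifP => [/eqP e|_]; last by rewrite !(mulr0, mul0r).
  by rewrite (ord_inj e) d1 addr0 mulrC.
have ni' : nat_of_ord i != 1%N by apply: contra ni => /eqP e; apply/eqP/ord_inj.
have nj' : nat_of_ord j != 1%N by apply: contra nj => /eqP e; apply/eqP/ord_inj.
rewrite Fc_gen //; case: ifP => [/andP[i2 /eqP hj]|_]; last by rewrite !mxE !mul0r mulr0.
rewrite !mxE; case: ifP => [/eqP e|_]; last by rewrite !mulr0 mul0r.
have -> : m = o0 by apply: ord_inj.
by rewrite d0 hj dkn_partner // mulr0 mul0r.
Qed.

Lemma Fc_diag (b a : 'I_N) : b != o1 -> c b a 0 a = 0.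
Proof.
move=> nb; have nb' : nat_of_ord b != 1%N by apply: contra nb => /eqP e; apply/eqP/ord_inj.
case: (eqVneq a o1) => [->|na].
  rewrite (Fc_1 _ _ o1E) !mxE; case: ifP => [/eqP e|_]; last by rewrite mulr0.
  by case/eqP: nb; apply: ord_inj.
have na' : nat_of_ord a != 1%N by apply: contra na => /eqP e; apply/eqP/ord_inj.
rewrite Fc_gen //; case: ifP => [/andP[b2 /eqP ha]|_]; last by rewrite mxE.
rewrite !mxE; case: ifP => [/eqP e|_]; last by rewrite mulr0.
have e' : nat_of_ord a = 0%N := e.
by exfalso; move: ha b2 e'; rewrite /partner; case: (odd b) => /=; lia.
Qed.

Lemma adE (x : 'rV[K]_N) a m : ad c x a m = (\sum_i x 0 i *: c i a) 0 m.
Proof. by rewrite mxE br_e2. Qed.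

Lemma ad_gen b (a : 'I_N) : ad c (basis_vec K b) a a + lam a * ad c (basis_vec K b) o0 o0 = 0.
Proof.
rewrite /ad !mxE !br_ee.
case: (eqVneq b o1) => [->|nb]; last by rewrite !Fc_diag // mulr0 addr0.
rewrite !(Fc1 _ _ o1E) !mxE !eqxx o0E /=; ring.
Qed.

Lemma Inn_fun M : M \in Inn c -> forall a, M a a + lam a * M o0 o0 = 0.
Proof.
rewrite /Inn; set X := [seq _ | _ <- _] => hM a.
have := coord_span (X := in_tuple X) hM => ->.
rewrite !summxE mulr_sumr -big_split /=; apply: big1 => i _.
have : X`_i \in X by apply: mem_nth; rewrite -{2}(size_tuple (in_tuple X)) ltn_ord.
case/mapP => b _ ->.
have := ad_gen b a; rewrite /ad !mxE => h.
by rewrite mulrCA -mulrDr h mulr0.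
Qed.

Definition Xs : seq 'M[K]_N := [seq Ek k | k <- iota 1 p.-1].
Definition Esp : {vspace 'M[K]_N} := <<Xs>>%VS.

Lemma size_Xs : size Xs = p.-1.
Proof. by rewrite size_map size_iota. Qed.

Lemma nth_Xs (i : 'I_(size Xs)) : Xs`_i = Ek i.+1.
Proof.
have hi := ltn_ord i; rewrite [X in (_ < X)%N]size_Xs in hi.
by rewrite (nth_map 0%N) ?size_iota // nth_iota // add1n.
Qed.

Definition eo (i : nat) : 'I_N := insubd o0 (2 * i.+1).
Lemma eoE i : (i < p.-1)%N -> nat_of_ord (eo i) = (2 * i.+1)%N.
Proof. by move=> h; rewrite /eo val_insubd ifT //; lia. Qed.

Lemma Esum_entry (y : 'I_(size Xs) -> K) (a m : 'I_N) :
  (\sum_i y i *: Ek i.+1) a m = (a == m)%:R * \sum_i y i * dkn i.+1 a.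
Proof.
rewrite summxE mulr_sumr; apply: eq_bigr => i _; rewrite !mxE.
by rewrite mulrCA.
Qed.

Lemma dsum_small (y : 'I_(size Xs) -> K) (a : 'I_N) : (a < 2)%N -> \sum_i y i * dkn i.+1 a = 0.
Proof. by move=> a2; apply: big1 => i _; rewrite dkn_small // mulr0. Qed.

Lemma dsum_big (y : 'I_(size Xs) -> K) (a : 'I_N) (i0 : 'I_(size Xs)) : (2 <= a)%N ->
  nat_of_ord i0 = (a./2).-1 -> \sum_i y i * dkn i.+1 a = (if odd a then -1 else 1) * y i0.
Proof.
move=> a2 hi0; rewrite (bigD1 i0) //= big1 ?addr0 => [|i ne].
  rewrite mulrC /dkn hi0; case oa: (odd a);
  case: eqP => e1; case: eqP => e2; try lia; rewrite /=; ring.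
have ne' : nat_of_ord i != nat_of_ord i0 by apply: contra ne => /eqP e; apply/eqP/ord_inj.
rewrite /dkn; case: eqP => e1; case: eqP => e2; try lia.
by rewrite subrr mulr0.
Qed.

Lemma ltXs (i : 'I_(size Xs)) : (i < p.-1)%N.
Proof. by have := ltn_ord i; rewrite [X in (_ < X)%N -> _]size_Xs. Qed.

Lemma Esum_eo (y : 'I_(size Xs) -> K) (i0 : 'I_(size Xs)) :
  (\sum_i y i *: Ek i.+1) (eo i0) (eo i0) = y i0.
Proof.
have h := eoE (ltXs i0).
rewrite Esum_entry eqxx mul1r (dsum_big _ (i0 := i0)) h.
- have -> : odd (2 * i0.+1) = false by lia.
  by rewrite mul1r.
- lia.
- lia.
Qed.

Lemma Esum_o0 (y : 'I_(size Xs) -> K) : (\sum_i y i *: Ek i.+1) o0 o0 = 0.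
Proof. by rewrite Esum_entry dsum_small ?mulr0. Qed.

Lemma E_Inn_zero (y : 'I_(size Xs) -> K) : (\sum_i y i *: Ek i.+1) \in Inn c -> forall i, y i = 0.
Proof.
move=> hI i; have := Inn_fun hI (eo i).
by rewrite Esum_eo Esum_o0 mulr0 addr0.
Qed.

Lemma sumXs (y : 'I_(size Xs) -> K) : \sum_i y i *: Xs`_i = \sum_i y i *: Ek i.+1.
Proof. by apply: eq_bigr => i _; rewrite nth_Xs. Qed.

Lemma freeXs : free Xs.
Proof.
apply/(freeP (X := in_tuple Xs)) => k hk i; apply: E_Inn_zero.
by rewrite -sumXs hk mem0v.
Qed.

Lemma dimE : \dim Esp = p.-1.
Proof. by move: freeXs; rewrite /free => /eqP ->; apply: size_Xs. Qed.

Lemma capIE : (Inn c :&: Esp = 0)%VS.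
Proof.
apply/eqP; rewrite -subv0; apply/subvP => M; rewrite memv_cap => /andP[hI hE]; rewrite memv0.
have eM := coord_span (X := in_tuple Xs) hE.
move: eM; rewrite sumXs => eM; rewrite eM in hI; have y0 := E_Inn_zero hI.
by rewrite eM big1 // => i _; rewrite y0 scale0r.
Qed.

Lemma EDer : (Esp <= Der c)%VS.
Proof.
apply/span_subvP => x /mapP [k hk ->]; apply: Ek_Der.
by move: hk; rewrite mem_iota; lia.
Qed.

Lemma ad_lin (x : 'rV[K]_N) : ad c x = \sum_b x 0 b *: ad c (basis_vec K b).
Proof.
apply/matrixP => a m; rewrite adE !summxE; apply: eq_bigr => b _.
by rewrite !mxE br_ee.
Qed.

Lemma ad_Inn x : ad c x \in Inn c.
Proof.
rewrite ad_lin; apply: memv_suml => b _; apply: memvZ; apply: memv_span.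
by apply: map_f; rewrite mem_enum.
Qed.

Lemma neq_nat (u v : 'I_N) : u != v -> (nat_of_ord u == nat_of_ord v) = false.
Proof. by move=> h; apply/negbTE; apply: contra h => /eqP e; apply/eqP/ord_inj. Qed.

Lemma Der_sub D : D \in Der c -> D \in (Inn c + Esp)%VS.
Proof.
move=> hD.
pose w : 'rV[K]_N := \row_m (if m == o1 then - D o0 o0 else - D o1 m / lam m).
pose y : 'I_(size Xs) -> K := fun i => D (eo i) (eo i) + D o0 o0 * phi i.+1.
suff -> : D = ad c w + \sum_i y i *: Ek i.+1.
  apply: memv_add; first exact: ad_Inn.
  apply: memv_suml => i _; apply: memvZ; apply: memv_span; rewrite -nth_Xs.
  by apply: mem_nth; exact: ltn_ord.
apply/matrixP => a m; rewrite [RHS]mxE adE Esum_entry.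
have wE t : w 0 t = (if t == o1 then - D o0 o0 else - D o1 t / lam t) by rewrite mxE.
have e0 := o0E; have e1 := o1E.
case: (ltnP a 2) => a2.
- rewrite dsum_small // mulr0 addr0.
  case: (eqVneq a o0) => [->|a0].
  + rewrite (sum_col0 _ _ _ o0E o1E) wE eqxx mulNr opprK.
    case: (eqVneq m o0) => [->|m0]; first by rewrite o0E eqxx mulr1.
    by rewrite F2 // (neq_nat m0) mulr0.
  + have -> : a = o1 by apply: ord_inj; have := neq_nat a0; lia.
    rewrite (sum_col1 _ _ _ o1E) wE.
    case: (eqVneq m o1) => [->|m1]; first by rewrite F1 // o1E /= mulr0 oppr0.
    have lm : lam m != 0 by apply: lam_nz; have := neq_nat m1; lia.
    by rewrite !mulNr opprK divfK.
- have ha := ltn_ord a.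
  have hi : ((a./2).-1 < size Xs)%N by rewrite size_Xs; lia.
  rewrite (sum_col _ _ _ o1E a2 (pordE a2)) (dsum_big _ (i0 := Ordinal hi)) //.
  set b := pord a.
  have hb : nat_of_ord b = partner a by rewrite pordE.
  have b2 : (2 <= b)%N by rewrite hb partner_ge2.
  have b1 : b != o1 by apply/eqP => e; move: hb; rewrite e o1E /partner; case oa: (odd a) => /=; lia.
  rewrite wE eqxx wE (negbTE b1).
  have ey : eo (Ordinal hi) = insubd o0 (2 * a./2) by rewrite /eo /=; congr (insubd _ _); lia.
  case: (eqVneq m a) => [->|ma].
  + have -> : (nat_of_ord a == 0%N) = false by lia.
    rewrite eqxx mulr1 mulr0 addr0 mul1r /y ey (lamE _ a2) /=.
    have -> : (a./2).-1.+1 = a./2 by lia.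
    case oa: (odd a).
    * have eb : insubd o0 (2 * a./2) = b.
        by apply: ord_inj; rewrite val_insubd hb /partner oa ifT; lia.
      have eab : pord b = a by apply: ord_inj; rewrite pordE // hb partner_invol.
      have nob : ~~ odd b by rewrite hb partner_odd oa.
      have F := F5 hD b2 nob; rewrite eab in F.
      rewrite eb; apply: (eq_of (k := -1) F); ring.
    * have ea : insubd o0 (2 * a./2) = a.
        by apply: ord_inj; rewrite val_insubd ifT; lia.
      by rewrite ea; ring.
  + have am : a != m by rewrite eq_sym.
    rewrite (neq_nat ma) mulr0 mul0r add0r addr0.
    case: (eqVneq m o0) => [->|m0]; last by rewrite (neq_nat m0) mulr0 (F3 hD a2 m0 ma).
    rewrite o0E eqxx mulr1.
    have e4 := F4 hD a2; fold b in e4.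
    have lp := lam_partner phi a2; rewrite -hb in lp.
    have lb : lam b != 0 by apply: lam_nz; lia.
    rewrite o0E /= in e4.
    have -> : D a o0 = (lam b)^-1 * (lam b * D a o0) by rewrite mulKf.
    have -> : lam b * D a o0 = - (D o1 b * sgn K b).
      rewrite -e4; have -> : lam a - -1 = - lam b by rewrite -lp; ring.
      by rewrite mulNr opprK.
    ring.
Qed.


Lemma H1_main : H1_dim c = p.-1.
Proof.
rewrite /H1_dim.
have e : Der c = (Der c :&: Inn c + Esp)%VS.
  apply/eqP; rewrite eqEsubv; apply/andP; split.
  - apply/subvP => D hD; have := Der_sub hD; case/memv_addP => u hu [v hv eD].
    have hv' : v \in Der c by apply: (subvP EDer).
    have hu' : u \in Der c by have := memvB hD hv'; rewrite eD addrK.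
    by rewrite eD; apply: memv_add => //; rewrite memv_cap hu' hu.
  - by rewrite subv_add capvSl EDer.
rewrite {1}e dimv_disjoint_sum ?dimE; first by rewrite addKn.
apply/eqP; rewrite -subv0; apply: (subv_trans (_ : _ <= Inn c :&: Esp)%VS).
  by apply: capvS; [exact: capvSr | exact: subvv].
by rewrite capIE.
Qed.
End Main.

Theorem corollary1 (R : realType) (p : nat) (phi : nat -> R[i]) :
  (2 <= p)%N -> ~ in_Omega1 p phi ->
  H1_dim (Fc p phi) = p.-1.
Proof.
move=> hp hO; apply: H1_main => //.
- move=> k hk; apply/eqP => e; apply: hO; right; exists k; split => //; exact: Or31.
- move=> k hk; apply/eqP => e; apply: hO; right; exists k; split => //; apply: Or32.
  by rewrite addrC.
- move=> k l hk hl hkl; apply/eqP => e; apply: hO; left; exists k, l; split => //.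
  by apply: Or33; split => //; rewrite e subrr.
- move=> k l hk hl; apply/eqP => e; apply: hO; left; exists k, l; split => //.
  exact: Or31.
Qed.
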